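(* Let $\mathbf{IL}\mathsf X$ be a Horn logic and let $T$ be an $\mathbf{IL}\mathsf X$-satisfiable $\mathbf{IL}\mathsf X$-tableau (for some finite set $\Gamma$ of formulas). Then for any tableau rule, the tableau $T'$ obtained from $T$ by an application of that rule is also $\mathbf{IL}\mathsf X$-satisfiable.
   Context: Formulas: built from a countable set $\mathsf{Prop}$ of propositional variables by $\neg$, $\to$, unary $\Box$ and binary $\rhd$. $\mathbf{IL}$ is the modal logic with axioms all instances of propositional tautologies and the schemes $\Box(A\to B)\to(\Box A\to\Box B)$, $\Box(\Box A\to A)\to\Box A$, $\Box(A\to B)\to A\rhd B$, $(A\rhd B)\wedge(B\rhd C)\to A\rhd C$, $(A\rhd C)\wedge(B\rhd C)\to A\vee B\rhd C$, $A\rhd B\to(\Diamond A\to\Diamond B)$, $\Diamond A\rhd A$ ($\Diamond=\neg\Box\neg$), rules modus ponens and necessitation. An $\mathbf{IL}$-frame is $\langle W,R,S\rangle$ with $W\neq\emptyset$, $R$ transitive and Noetherian (no infinite chains $x_0Rx_1Rx_2\cdots$), $S$ ternary, $yS_xz$ meaning $(x,y,z)\in S$, each $S_x$ a reflexive transitive relation on $\{y:xRy\}$, and $xRyRz\Rightarrow yS_xz$. A model adds a valuation $V$; forcing is standard for $\neg,\to$; $x\Vdash\Box A$ iff all $R$-successors force $A$; $x\Vdash A\rhd B$ iff for every $y$ with $xRy$ and $y\Vdash A$ there is $z$ with $yS_xz$, $z\Vdash B$; and for $w\in W$, $y\Vdash\Box_wA$ iff every $z$ with $yS_wz$ forces $A$.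 $\mathbf{IL}\mathsf X$ is $\mathbf{IL}$ plus axiom schemes $\mathsf X$; it is Horn if there is a set $\mathcal C_{\mathsf X}$ of strict universal Horn sentences $\forall\cdots\forall(\varphi_1\wedge\dots\wedge\varphi_n\to\psi)$ ($n\ge0$, atomic $\varphi_i,\psi$) in the language $\{R,S\}$ such that an $\mathbf{IL}$-frame validates all theorems of $\mathbf{IL}\mathsf X$ iff it satisfies $\mathcal C_{\mathsf X}$; $\mathbf{IL}\mathsf X$-frames/models are those satisfying $\mathcal C_{\mathsf X}$. Labels: $0$; $\sigma Rn$ for a label $\sigma$, $n\in\mathbb N$; $\sigma S_\rho n$ for labels $\sigma,\rho$ with $\rho$ a strict non-empty prefix of $\sigma$. Extended formulas also allow unary operators $\Box_\rho$, $\rho$ a label. Labelled formula: $\sigma::A$. For a set $\Lambda$ of labels, $\mathbf R^\Lambda,\mathbf S^\Lambda$ are the least relations on $\Lambda$ with: (1) $\sigma,\sigma Rn\in\Lambda\Rightarrow\sigma\mathbf R\,\sigma Rn$; (2) $\mathbf R$ transitive; (3) $\sigma,\rho,\sigma S_\rho n\in\Lambda\Rightarrow\sigma\mathbf S_\rho\,\sigma S_\rho n$; (4) $\sigma\mathbf R\tau\Rightarrow\tau\mathbf S_\sigma\tau$; (5) $\rho\mathbf R\sigma\mathbf R\tau\Rightarrow\sigma\mathbf S_\rho\tau$; (6) $\sigma\mathbf S_\rho\tau\mathbf S_\rho\upsilon\Rightarrow\sigma\mathbf S_\rho\upsilon$; (7) $\sigma\mathbf S_\rho\tau\Rightarrow\rho\mathbf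 R\sigma,\rho\mathbf R\tau$; (8) $\langle\Lambda,\mathbf R^\Lambda,\mathbf S^\Lambda\rangle\models\mathcal C_{\mathsf X}$ (where $\sigma\mathbf S_\rho\tau$ means $(\rho,\sigma,\tau)\in\mathbf S^\Lambda$). Tableau rules w.r.t. $\Lambda$ (antecedent $\Rightarrow$ succedents; ''$\mid$'' = branching): $\sigma::\neg\neg A\Rightarrow\sigma::A$; $\sigma::A\to B\Rightarrow\sigma::\neg A\mid\sigma::B$; $\sigma::\neg(A\to B)\Rightarrow\sigma::A,\sigma::\neg B$; $\sigma::\Box A\Rightarrow\tau::A$ when $\sigma\mathbf R\tau$; $\sigma::\Box_\rho A\Rightarrow\tau::A$ when $\sigma\mathbf S_\rho\tau$; $\sigma::A\rhd B\Rightarrow\tau::\neg A\mid\tau::\neg\Box_\sigma\neg B$ when $\sigma\mathbf R\tau$; $\sigma::\neg\Box A\Rightarrow\sigma Rn::\neg A,\sigma Rn::\Box A$ with $\sigma Rn\notin\Lambda$; $\sigma::\neg\Box_\rho A\Rightarrow\sigma S_\rho n::\neg A,\sigma S_\rho n::\Box A$ with $\sigma S_\rho n\notin\Lambda$; $\sigma::\neg(A\rhd B)\Rightarrow\sigma Rn::A,\sigma Rn::\Box_\sigma\neg B,\sigma Rn::\Box\neg A$ with $\sigma Rn\notin\Lambda$. $\mathbf{IL}\mathsf X$-tableau for finite $\Gamma$ (downward growing binary tree of labelled formulas), inductively: a single node $0::A$ with $A\in\Gamma$; extending any branch by $0::A$, $A\in\Gamma$; if $\mathcal B$ is a branch and some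 $\sigma::A$ on $\mathcal B$ is the antecedent of an instance of a rule w.r.t. $\mathrm{lab}(\mathcal B)$ (labels occurring on $\mathcal B$), extending $\mathcal B$ by the succedents (with branching). Satisfiability: a set $\mathcal X$ of labelled formulas is $\mathbf{IL}\mathsf X$-satisfiable if there are an $\mathbf{IL}\mathsf X$-model $M=\langle W,R,S,V\rangle$ and a map $I:\mathrm{lab}(\mathcal X)\to W$ such that (i) $\sigma\mathbf R\tau\Rightarrow I(\sigma)RI(\tau)$; (ii) $\sigma\mathbf S_\rho\tau\Rightarrow I(\sigma)S_{I(\rho)}I(\tau)$ (relations $\mathbf R^{\mathrm{lab}(\mathcal X)},\mathbf S^{\mathrm{lab}(\mathcal X)}$); (iii) $M,I(\sigma)\Vdash A$ for all $\sigma::A\in\mathcal X$, with $\Box_\rho$ interpreted as $\Box_{I(\rho)}$. A tableau is $\mathbf{IL}\mathsf X$-satisfiable if some branch of it is. *)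

(* Defs.v *)
From Stdlib Require Import List.
Import ListNotations.

(* L0 = "0";  LR s n = "s R n";  LS s r n = "s S_r n" *)
Inductive label : Type :=
| L0 : label
| LR : label -> nat -> label
| LS : label -> label -> nat -> label.

(* r is a strict (non-empty) prefix of s, prefixes taken at label boundaries *)
Inductive strict_prefix : label -> label -> Prop :=
| sp_R  : forall s n, strict_prefix s (LR s n)
| sp_Rt : forall r s n, strict_prefix r s -> strict_prefix r (LR s n)
| sp_S  : forall s q n, strict_prefix s (LS s q n)
| sp_St : forall r s q n, strict_prefix r s -> strict_prefix r (LS s q n).

Inductive is_label : label -> Prop :=
| il0 : is_label L0
| ilR : forall s n, is_label s -> is_label (LR s n)
| ilS : forall s r n, is_label s -> is_label r -> strict_prefix r s ->
          is_label (LS s r n).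

Inductive form : Type :=
| Var  : nat -> form
| Neg  : form -> form
| Imp  : form -> form -> form
| Box  : form -> form
| Rhd  : form -> form -> form
| BoxL : label -> form -> form.

Fixpoint pure (A : form) : Prop :=
  match A with
  | Var _ => True
  | Neg A => pure A
  | Imp A B => pure A /\ pure B
  | Box A => pure A
  | Rhd A B => pure A /\ pure B
  | BoxL _ _ => False
  end.

Definition And (A B : form) := Neg (Imp A (Neg B)).
Definition Or (A B : form) := Imp (Neg A) B.
Definition Dia (A : form) := Neg (Box (Neg A)).

Definition noetherian (W : Type) (R : W -> W -> Prop) : Prop :=
  ~ exists f : nat -> W, forall n, R (f n) (f (S n)).

(* S x y z  means  y S_x z *)
Definition il_frame (W : Type) (R : W -> W -> Prop) (S : W -> W -> W -> Prop)
  : Prop :=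
  inhabited W /\
  (forall x y z, R x y -> R y z -> R x z) /\
  noetherian W R /\
  (forall x y z, S x y z -> R x y /\ R x z) /\
  (forall x y, R x y -> S x y y) /\
  (forall x y z u, S x y z -> S x z u -> S x y u) /\
  (forall x y z, R x y -> R y z -> S x y z).

Fixpoint forces (W : Type) (R : W -> W -> Prop) (S : W -> W -> W -> Prop)
  (V : W -> nat -> Prop) (I : label -> W) (w : W) (A : form) : Prop :=
  match A with
  | Var p => V w p
  | Neg A => ~ forces W R S V I w A
  | Imp A B => forces W R S V I w A -> forces W R S V I w B
  | Box A => forall v, R w v -> forces W R S V I v A
  | Rhd A B => forall y, R w y -> forces W R S V I y A ->
                 exists z, S w y z /\ forces W R S V I z B
  | BoxL r A => forall z, S (I r) w z -> forces W R S V I z A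
  end.

(* validity in a frame (for ordinary formulas I is irrelevant) *)
Definition valid (W : Type) (R : W -> W -> Prop) (S : W -> W -> W -> Prop)
  (A : form) : Prop :=
  forall (V : W -> nat -> Prop) (I : label -> W) (w : W), forces W R S V I w A.

Fixpoint peval (v : form -> bool) (A : form) : bool :=
  match A with
  | Neg A => negb (peval v A)
  | Imp A B => implb (peval v A) (peval v B)
  | _ => v A
  end.

Definition tautology (A : form) : Prop := forall v, peval v A = true.

Fixpoint subst (s : nat -> form) (A : form) : form :=
  match A with
  | Var p => s p
  | Neg A => Neg (subst s A)
  | Imp A B => Imp (subst s A) (subst s B)
  | Box A => Box (subst s A)
  | Rhd A B => Rhd (subst s A) (subst s B)
  | BoxL r A => BoxL r (subst s A)
  end.

(* X : the set of additional axiom schemes (given by representative formulas;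
   all substitution instances are axioms) *)
Inductive provable (X : form -> Prop) : form -> Prop :=
| pr_taut : forall A, pure A -> tautology A -> provable X A
| pr_K : forall A B, pure A -> pure B ->
    provable X (Imp (Box (Imp A B)) (Imp (Box A) (Box B)))
| pr_L : forall A, pure A ->
    provable X (Imp (Box (Imp (Box A) A)) (Box A))
| pr_J1 : forall A B, pure A -> pure B ->
    provable X (Imp (Box (Imp A B)) (Rhd A B))
| pr_J2 : forall A B C, pure A -> pure B -> pure C ->
    provable X (Imp (And (Rhd A B) (Rhd B C)) (Rhd A C))
| pr_J3 : forall A B C, pure A -> pure B -> pure C ->
    provable X (Imp (And (Rhd A C) (Rhd B C)) (Rhd (Or A B) C))
| pr_J4 : forall A B, pure A -> pure B ->
    provable X (Imp (Rhd A B) (Imp (Dia A) (Dia B)))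
| pr_J5 : forall A, pure A -> provable X (Rhd (Dia A) A)
| pr_X : forall B s, X B -> (forall p, pure (s p)) -> provable X (subst s B)
| pr_MP : forall A B, provable X (Imp A B) -> provable X A -> provable X B
| pr_Nec : forall A, provable X A -> provable X (Box A).

(* first-order variables are naturals; HS x y z stands for  y S_x z *)
Inductive hatom : Type :=
| HR : nat -> nat -> hatom
| HS : nat -> nat -> nat -> hatom.

Record hsent : Type := mkH { hbody : list hatom; hhead : hatom }.

Definition hatom_sat (W : Type) (R : W -> W -> Prop) (S : W -> W -> W -> Prop)
  (g : nat -> W) (a : hatom) : Prop :=
  match a with
  | HR x y => R (g x) (g y)
  | HS x y z => S (g x) (g y) (g z)
  end.

Definition horn_sat (W : Type) (R : W -> W -> Prop) (S : W -> W -> W -> Prop)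
  (C : hsent -> Prop) : Prop :=
  forall h, C h -> forall g : nat -> W,
    (forall a, In a (hbody h) -> hatom_sat W R S g a) ->
    hatom_sat W R S g (hhead h).

(* IL X is Horn, witnessed by the set C of Horn sentences *)
Definition horn_for (X : form -> Prop) (C : hsent -> Prop) : Prop :=
  forall (W : Type) (R : W -> W -> Prop) (S : W -> W -> W -> Prop),
    il_frame W R S ->
    ((forall A, provable X A -> valid W R S A) <-> horn_sat W R S C).

Inductive gatom : Type :=
| GR : label -> label -> gatom
| GS : label -> label -> label -> gatom.     (* GS r s t : s S_r t *)

Definition ginst (g : nat -> label) (a : hatom) : gatom :=
  match a with
  | HR x y => GR (g x) (g y)
  | HS x y z => GS (g x) (g y) (g z)
  end.

(* least relations on Lambda satisfying (1)-(8) *)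
Inductive clos (C : hsent -> Prop) (L : label -> Prop) : gatom -> Prop :=
| cl1 : forall s n, L s -> L (LR s n) -> clos C L (GR s (LR s n))
| cl2 : forall s t u, clos C L (GR s t) -> clos C L (GR t u) -> clos C L (GR s u)
| cl3 : forall s r n, L s -> L r -> L (LS s r n) ->
    clos C L (GS r s (LS s r n))
| cl4 : forall s t, clos C L (GR s t) -> clos C L (GS s t t)
| cl5 : forall r s t, clos C L (GR r s) -> clos C L (GR s t) -> clos C L (GS r s t)
| cl6 : forall r s t u, clos C L (GS r s t) -> clos C L (GS r t u) ->
    clos C L (GS r s u)
| cl7a : forall r s t, clos C L (GS r s t) -> clos C L (GR r s)
| cl7b : forall r s t, clos C L (GS r s t) -> clos C L (GR r t)
| cl8 : forall h (g : nat -> label), C h -> (forall v, L (g v)) ->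
    (forall a, In a (hbody h) -> clos C L (ginst g a)) ->
    clos C L (ginst g (hhead h)).

Definition Rl (C : hsent -> Prop) (L : label -> Prop) (s t : label) : Prop :=
  clos C L (GR s t).
(* Sl C L r s t : s S_r t *)
Definition Sl (C : hsent -> Prop) (L : label -> Prop) (r s t : label) : Prop :=
  clos C L (GS r s t).

Definition lform : Type := (label * form)%type.   (* (s, A) is  s :: A *)

Definition lab (Xs : list lform) (s : label) : Prop :=
  exists A, In (s, A) Xs.

Definition lsat (C : hsent -> Prop) (Xs : list lform) : Prop :=
  exists (W : Type) (R : W -> W -> Prop) (S : W -> W -> W -> Prop)
         (V : W -> nat -> Prop) (I : label -> W),
    il_frame W R S /\ horn_sat W R S C /\
    (forall s t, Rl C (lab Xs) s t -> R (I s) (I t)) /\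
    (forall r s t, Sl C (lab Xs) r s t -> S (I r) (I s) (I t)) /\
    (forall s A, In (s, A) Xs -> forces W R S V I (I s) A).

Inductive tree : Type :=
| T0 : lform -> tree
| T1 : lform -> tree -> tree
| T2 : lform -> tree -> tree -> tree.

Inductive branch : tree -> list lform -> Prop :=
| br0 : forall x, branch (T0 x) [x]
| br1 : forall x t B, branch t B -> branch (T1 x t) (x :: B)
| br2l : forall x t1 t2 B, branch t1 B -> branch (T2 x t1 t2) (x :: B)
| br2r : forall x t1 t2 B, branch t2 B -> branch (T2 x t1 t2) (x :: B).

(* succedents: linear (added in sequence) or branching *)
Inductive succ : Type :=
| Lin : list lform -> succ
| Br : lform -> lform -> succ.

Fixpoint chain (x : lform) (l : list lform) : tree :=
  match l with
  | [] => T0 x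
  | y :: l' => T1 x (chain y l')
  end.

Definition attach (x : lform) (s : succ) : tree :=
  match s with
  | Lin l => chain x l
  | Br a b => T2 x (T0 a) (T0 b)
  end.

Inductive extend : tree -> list lform -> succ -> tree -> Prop :=
| ex0 : forall x s, extend (T0 x) [x] s (attach x s)
| ex1 : forall x t B s t', extend t B s t' -> extend (T1 x t) (x :: B) s (T1 x t')
| ex2l : forall x t1 t2 B s t1', extend t1 B s t1' ->
    extend (T2 x t1 t2) (x :: B) s (T2 x t1' t2)
| ex2r : forall x t1 t2 B s t2', extend t2 B s t2' ->
    extend (T2 x t1 t2) (x :: B) s (T2 x t1 t2').

Inductive rule_inst (C : hsent -> Prop) (L : label -> Prop) : lform -> succ -> Prop :=
| r_negneg : forall s A, rule_inst C L (s, Neg (Neg A)) (Lin [(s, A)])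
| r_imp : forall s A B, rule_inst C L (s, Imp A B) (Br (s, Neg A) (s, B))
| r_negimp : forall s A B,
    rule_inst C L (s, Neg (Imp A B)) (Lin [(s, A); (s, Neg B)])
| r_box : forall s t A, Rl C L s t -> rule_inst C L (s, Box A) (Lin [(t, A)])
| r_boxl : forall s r t A, Sl C L r s t ->
    rule_inst C L (s, BoxL r A) (Lin [(t, A)])
| r_rhd : forall s t A B, Rl C L s t ->
    rule_inst C L (s, Rhd A B) (Br (t, Neg A) (t, Neg (BoxL s (Neg B))))
| r_negbox : forall s n A, ~ L (LR s n) ->
    rule_inst C L (s, Neg (Box A)) (Lin [(LR s n, Neg A); (LR s n, Box A)])
| r_negboxl : forall s r n A, ~ L (LS s r n) -> is_label (LS s r n) ->
    rule_inst C L (s, Neg (BoxL r A))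
      (Lin [(LS s r n, Neg A); (LS s r n, Box A)])
| r_negrhd : forall s n A B, ~ L (LR s n) ->
    rule_inst C L (s, Neg (Rhd A B))
      (Lin [(LR s n, A); (LR s n, BoxL s (Neg B)); (LR s n, Box (Neg A))]).

Definition rule_step (C : hsent -> Prop) (T T' : tree) : Prop :=
  exists (B : list lform) (a : lform) (s : succ),
    branch T B /\ In a B /\ rule_inst C (lab B) a s /\ extend T B s T'.

Inductive is_tableau (C : hsent -> Prop) (Gamma : list form) : tree -> Prop :=
| tab_init : forall A, In A Gamma -> is_tableau C Gamma (T0 (L0, A))
| tab_gamma : forall T B A T', is_tableau C Gamma T -> In A Gamma ->
    branch T B -> extend T B (Lin [(L0, A)]) T' -> is_tableau C Gamma T'
| tab_rule : forall T T', is_tableau C Gamma T -> rule_step C T T' ->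
    is_tableau C Gamma T'.

Definition tab_sat (C : hsent -> Prop) (T : tree) : Prop :=
  exists B, branch T B /\ lsat C B.

(* Main.v *)
Require Import Defs.
From Stdlib Require Import List Classical ClassicalEpsilon.
Import ListNotations.

Fixpoint bl (A : form) (r : label) : Prop :=
  match A with
  | Var _ => False
  | Neg A => bl A r
  | Imp A B => bl A r \/ bl B r
  | Box A => bl A r
  | Rhd A B => bl A r \/ bl B r
  | BoxL q A => q = r \/ bl A r
  end.

Lemma pure_bl : forall A r, pure A -> ~ bl A r.
Proof. induction A; simpl; intros; intuition eauto. Qed.

Definition comps (L : label -> Prop) (x : label) : Prop :=
  match x with L0 => True | LR s _ => L s | LS s r _ => L s /\ L r end.
Definition dc (L : label -> Prop) := forall x, L x -> comps L x.
Definition InvL (B : list lform) :=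
  dc (lab B) /\ forall l A, In (l, A) B -> forall r, bl A r -> lab B r.

Definition succ_lists (s : succ) : list (list lform) :=
  match s with Lin l => [l] | Br a b => [[a]; [b]] end.

Lemma chain_branch : forall l x, branch (chain x l) (x :: l).
Proof. induction l; simpl; intros; constructor; auto. Qed.

Lemma chain_branch_inv : forall l x B0, branch (chain x l) B0 -> B0 = x :: l.
Proof.
  induction l; simpl; intros x B0 H; inversion H; subst; auto.
  f_equal; eauto.
Qed.

Lemma ext_new : forall T B s T', extend T B s T' ->
  forall N, In N (succ_lists s) -> branch T' (B ++ N).
Proof.
  induction 1; intros N HN; simpl.
  - destruct s; simpl in HN.
    + destruct HN as [<-|[]]. apply chain_branch.
    + destruct HN as [<-|[<-|[]]]; simpl.
      * apply br2l; constructor.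
      * apply br2r; constructor.
  - constructor; auto.
  - apply br2l; auto.
  - apply br2r; auto.
Qed.

Lemma ext_old : forall T B s T', extend T B s T' ->
  forall B0, branch T B0 -> B0 <> B -> branch T' B0.
Proof.
  induction 1; intros B0 Hb Hn; inversion Hb; subst.
  - congruence.
  - constructor; apply IHextend; auto; congruence.
  - apply br2l; apply IHextend; auto; congruence.
  - apply br2r; auto.
  - apply br2l; auto.
  - apply br2r; apply IHextend; auto; congruence.
Qed.

Lemma ext_back : forall T B s T', extend T B s T' ->
  forall B0, branch T' B0 -> branch T B0 \/
     exists N, In N (succ_lists s) /\ B0 = B ++ N.
Proof.
  induction 1; intros B0 Hb.
  - right. destruct s; simpl in Hb.
    + apply chain_branch_inv in Hb. exists l; simpl; auto.
    + inversion Hb; subst; match goal with H : branch (T0 _) _ |- _ => inversion H; subst end.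
      * exists [l]; simpl; auto.
      * exists [l0]; simpl; auto.
  - inversion Hb; subst.
    match goal with H : branch t' _ |- _ => destruct (IHextend _ H) as [H'|[N [HN ->]]] end.
    + left; constructor; auto.
    + right; exists N; auto.
  - inversion Hb; subst.
    + match goal with H : branch t1' _ |- _ => destruct (IHextend _ H) as [H'|[N [HN ->]]] end.
      * left; apply br2l; auto.
      * right; exists N; auto.
    + left; apply br2r; auto.
  - inversion Hb; subst.
    + left; apply br2l; auto.
    + match goal with H : branch t2' _ |- _ => destruct (IHextend _ H) as [H'|[N [HN ->]]] end.
      * left; apply br2r; auto.
      * right; exists N; auto.
Qed.

Lemma lab_app : forall B N x, lab (B ++ N) x <-> lab B x \/ lab N x.
Proof.
  unfold lab; split.
  - intros [A H]; apply in_app_or in H; destruct H; eauto.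
  - intros [[A H]|[A H]]; exists A; apply in_or_app; auto.
Qed.

Lemma clos_mono : forall C (L L' : label -> Prop), (forall x, L x -> L' x) ->
  forall a, clos C L a -> clos C L' a.
Proof.
  intros C L L' HL a H; induction H.
  - apply cl1; auto.
  - eapply cl2; eauto.
  - apply cl3; auto.
  - apply cl4; auto.
  - apply cl5; auto.
  - eapply cl6; eauto.
  - eapply cl7a; eauto.
  - eapply cl7b; eauto.
  - apply cl8; auto.
Qed.

Definition glabs (L : label -> Prop) (a : gatom) : Prop :=
  match a with GR s t => L s /\ L t | GS r s t => L r /\ L s /\ L t end.

Lemma clos_labs : forall C L a, clos C L a -> glabs L a.
Proof.
  intros C L a H; induction H; simpl in *; intuition.
  destruct (hhead h); simpl; auto.
Qed.

Lemma sp_dc : forall L r s, strict_prefix r s -> dc L -> L s -> L r.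
Proof.
  intros L r s H; induction H; intros Hd Hs; apply Hd in Hs; simpl in Hs; intuition.
Qed.

Lemma inv_app : forall B N, InvL B ->
  (forall x, lab N x -> lab B x \/ comps (lab B) x) ->
  (forall l A, In (l, A) N -> forall r, bl A r -> lab B r) ->
  InvL (B ++ N).
Proof.
  intros B N [Hd Hb] HN HNb; split.
  - intros x Hx. apply lab_app in Hx.
    assert (comps (lab B) x) by (destruct Hx as [Hx|Hx]; [auto| destruct (HN x Hx); auto]).
    destruct x; simpl in *; intuition; apply lab_app; auto.
  - intros l A Hin r Hr. apply lab_app. left.
    apply in_app_or in Hin; destruct Hin; eauto.
Qed.

Lemma rule_inv : forall C B a s N, InvL B -> In a B ->
  rule_inst C (lab B) a s -> In N (succ_lists s) -> InvL (B ++ N).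
Proof.
  intros C B a s N HI Ha Hr HN.
  destruct HI as [Hd Hb].
  assert (Hla : forall l A, a = (l, A) -> lab B l /\ forall r, bl A r -> lab B r).
  { intros l A ->; split; [exists A; auto | eapply Hb; eauto]. }
  apply inv_app; [split; auto| |];
  destruct Hr; simpl in HN;
  repeat (destruct HN as [<-|HN]; [|]); try contradiction;
  (edestruct Hla as [Hl Hbl]; [reflexivity|]);
  simpl in Hbl.
  all: first
    [ intros x [A0 HA0]; simpl in HA0;
      repeat (destruct HA0 as [HA0|HA0]; [injection HA0; intros; subst|]);
      try contradiction
    | intros l0 A0 HA0 r0 Hr0; simpl in HA0;
      repeat (destruct HA0 as [HA0|HA0]; [injection HA0; intros; subst|]);
      try contradiction ].
  all: try (left; assumption).
  all: try (left; match goal with H : Rl _ _ _ _ |- _ => apply clos_labs in H; simpl in H; tauto end).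
  all: try (left; match goal with H : Sl _ _ _ _ _ |- _ => apply clos_labs in H; simpl in H; tauto end).
  all: try (right; simpl; auto; fail).
  all: simpl in *; try (apply Hbl; simpl; tauto).
  all: destruct Hr0 as [<-|Hr0]; auto.

Qed.

Lemma tab_inv : forall C Gamma T, (forall A, In A Gamma -> pure A) ->
  is_tableau C Gamma T -> forall B, branch T B -> InvL B.
Proof.
  intros C Gamma T HG H; induction H; intros B0 Hb.
  - inversion Hb; subst. split.
    + intros x [A0 [HA0|[]]]; injection HA0; intros; subst; simpl; auto.
    + intros l A0 [HA0|[]] r Hr; injection HA0; intros; subst.
      exfalso; eapply pure_bl; eauto.
  - destruct (ext_back _ _ _ _ H2 _ Hb) as [Hb'|[N [HN ->]]]; auto.
    simpl in HN; destruct HN as [<-|[]].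
    apply inv_app; auto.
    + intros x [A0 [HA0|[]]]; injection HA0; intros; subst; simpl; auto.
    + intros l A0 [HA0|[]] r Hr; injection HA0; intros; subst.
      exfalso; eapply pure_bl; eauto.
  - destruct H0 as [B [a [s [HB [Ha [Hr He]]]]]].
    destruct (ext_back _ _ _ _ He _ Hb) as [Hb'|[N [HN ->]]]; auto.
    eapply rule_inv; eauto.
Qed.

Lemma forces_ext W R S V : forall A (I I' : label -> W),
  (forall r, bl A r -> I r = I' r) ->
  forall w, forces W R S V I w A <-> forces W R S V I' w A.
Proof.
  induction A; simpl; intros I I' H w.
  - tauto.
  - specialize (IHA I I' H w); tauto.
  - specialize (IHA1 I I' (fun r h => H r (or_introl h)) w).
    specialize (IHA2 I I' (fun r h => H r (or_intror h)) w); tauto.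
  - split; intros Hf v Hv; apply (IHA I I' H v); auto.
  - split; intros Hf y Hy HA.
    + apply (IHA1 I I' (fun r h => H r (or_introl h)) y) in HA.
      destruct (Hf y Hy HA) as [z [Hz HB]]; exists z; split; auto.
      apply (IHA2 I I' (fun r h => H r (or_intror h)) z); auto.
    + apply (IHA1 I I' (fun r h => H r (or_introl h)) y) in HA.
      destruct (Hf y Hy HA) as [z [Hz HB]]; exists z; split; auto.
      apply (IHA2 I I' (fun r h => H r (or_intror h)) z); auto.
  - rewrite (H l (or_introl eq_refl)).
    split; intros Hf z Hz; apply (IHA I I' (fun r h => H r (or_intror h)) z); auto.
Qed.

Lemma maximal W (R : W -> W -> Prop) : noetherian W R ->
  forall P : W -> Prop, forall x, P x -> exists y, P y /\ forall z, R y z -> ~ P z.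
Proof.
  intros HN P x Hx. apply NNPP; intro Hc.
  assert (H' : forall y : {y | P y}, exists z : {z | P z}, R (proj1_sig y) (proj1_sig z)).
  { intros [y Hy]. apply NNPP; intro Hn. apply Hc. exists y; split; auto.
    intros z Hz Pz. apply Hn. exists (exist _ z Pz); auto. }
  set (step := fun y => proj1_sig (constructive_indefinite_description _ (H' y))).
  apply HN. exists (fun n => proj1_sig (Nat.iter n step (exist _ x Hx))).
  intro n. simpl. unfold step at 1.
  exact (proj2_sig (constructive_indefinite_description _ (H' _))).
Qed.

Definition label_eq_dec : forall x y : label, {x = y} + {x <> y}.
Proof. decide equality; decide equality. Defined.

Definition upd {W} (I : label -> W) (l : label) (w : W) : label -> W :=
  fun x => if label_eq_dec x l then w else I x.

Definition gsat W (R : W -> W -> Prop) (S : W -> W -> W -> Prop) (I : label -> W)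
  (a : gatom) : Prop :=
  match a with GR s t => R (I s) (I t) | GS r s t => S (I r) (I s) (I t) end.

Definition pc W (R : W -> W -> Prop) (S : W -> W -> W -> Prop) (L : label -> Prop)
  (I : label -> W) (l : label) (w : W) : Prop :=
  match l with
  | L0 => False
  | LR p _ => L p /\ R (I p) w
  | LS p q _ => L p /\ L q /\ S (I q) (I p) w
  end.

Lemma upd_old {W} (I : label -> W) l w (L : label -> Prop) x :
  L x -> ~ L l -> upd I l w x = I x.
Proof.
  intros Hx Hl; unfold upd; destruct (label_eq_dec x l); auto; subst; contradiction.
Qed.

Lemma upd_new {W} (I : label -> W) l w : upd I l w l = w.
Proof. unfold upd; destruct (label_eq_dec l l); congruence. Qed.

Lemma clos_ext W R S C (L : label -> Prop) (I : label -> W) l w :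
  il_frame W R S -> horn_sat W R S C -> dc L -> ~ L l ->
  (forall a, clos C L a -> gsat W R S I a) ->
  pc W R S L I l w ->
  forall a, clos C (fun x => L x \/ x = l) a -> gsat W R S (upd I l w) a.
Proof.
  intros [_ [Htr [_ [HSR [HRS [HSt HRRS]]]]]] Hh Hd Hl Hold Hpc a H.
  induction H; simpl in *.
  - destruct H0 as [H0|H0].
    + pose proof (Hd _ H0) as Hs; simpl in Hs.
      rewrite (upd_old I l w L s), (upd_old I l w L (LR s n)); auto.
      apply (Hold (GR s (LR s n))). apply cl1; auto.
    + subst l. simpl in Hpc. destruct Hpc as [Hs HR].
      rewrite upd_new, (upd_old I (LR s n) w L s); auto.
  - eauto.
  - destruct H1 as [H1|H1].
    + pose proof (Hd _ H1) as Hs; simpl in Hs.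
      rewrite (upd_old I l w L s), (upd_old I l w L r), (upd_old I l w L (LS s r n)); try tauto.
      apply (Hold (GS r s (LS s r n))). apply cl3; tauto.
    + subst l. simpl in Hpc. destruct Hpc as [Hs [Hr HS]].
      rewrite upd_new, (upd_old I (LS s r n) w L s), (upd_old I (LS s r n) w L r); auto.
  - auto.
  - auto.
  - eauto.
  - apply (HSR _ _ _ IHclos).
  - apply (HSR _ _ _ IHclos).
  - assert (Hg := Hh h H (fun v => upd I l w (g v))).
    assert (Hc : forall a, hatom_sat W R S (fun v => upd I l w (g v)) a =
                 gsat W R S (upd I l w) (ginst g a)) by (destruct a; reflexivity).
    rewrite <- Hc. apply Hg. intros a Ha. rewrite Hc. auto.
Qed.

Lemma static_ok C B N W R S V (I : label -> W) :
  il_frame W R S -> horn_sat W R S C ->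
  (forall s t, Rl C (lab B) s t -> R (I s) (I t)) ->
  (forall r s t, Sl C (lab B) r s t -> S (I r) (I s) (I t)) ->
  (forall s A, In (s, A) B -> forces W R S V I (I s) A) ->
  (forall x, lab N x -> lab B x) ->
  (forall l A, In (l, A) N -> forces W R S V I (I l) A) ->
  lsat C (B ++ N).
Proof.
  intros Hf Hh HR HS HF HN HNF.
  assert (Hm : forall x, lab (B ++ N) x -> lab B x)
    by (intros x Hx; apply lab_app in Hx; destruct Hx; auto).
  exists W, R, S, V, I; split; [exact Hf|]; split; [exact Hh|]; split; [|split].
  - intros s t H; apply HR; eapply clos_mono; eauto.
  - intros r s t H; apply HS; eapply clos_mono; eauto.
  - intros s A H; apply in_app_or in H; destruct H; auto.
Qed.

Lemma dyn_ok C B N W R S V (I : label -> W) l w :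
  il_frame W R S -> horn_sat W R S C ->
  (forall s t, Rl C (lab B) s t -> R (I s) (I t)) ->
  (forall r s t, Sl C (lab B) r s t -> S (I r) (I s) (I t)) ->
  (forall s A, In (s, A) B -> forces W R S V I (I s) A) ->
  InvL B -> ~ lab B l -> pc W R S (lab B) I l w ->
  (forall x, lab N x -> x = l) ->
  (forall l0 A, In (l0, A) N -> forces W R S V (upd I l w) w A) ->
  lsat C (B ++ N).
Proof.
  intros Hf Hh HR HS HF [Hd Hb] Hl Hpc HN HNF.
  assert (Hold : forall a, clos C (lab B) a -> gsat W R S I a).
  { intros [s t|r s t] H; simpl; [apply HR | apply HS]; exact H. }
  assert (Hm : forall x, lab (B ++ N) x -> lab B x \/ x = l)
    by (intros x Hx; apply lab_app in Hx; destruct Hx; auto).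
  pose proof (clos_ext W R S C (lab B) I l w Hf Hh Hd Hl Hold Hpc) as Hc.
  exists W, R, S, V, (upd I l w); split; [exact Hf|]; split; [exact Hh|]; split; [|split].
  - intros s t H; apply (Hc (GR s t)); eapply clos_mono; eauto.
  - intros r s t H; apply (Hc (GS r s t)); eapply clos_mono; eauto.
  - intros s A H; apply in_app_or in H; destruct H as [H|H].
    + assert (Hs : lab B s) by (exists A; auto).
      rewrite (upd_old I l w (lab B) s); auto.
      apply forces_ext with (I := I); [|auto].
      intros r Hr. symmetry. apply (upd_old I l w (lab B)); auto. eapply Hb; eauto.
    + assert (Hs : s = l) by (apply HN; exists A; auto). subst s.
      rewrite upd_new; eauto.
Qed.

Lemma agree W R S V (I : label -> W) (L : label -> Prop) l w A :
  ~ L l -> (forall r, bl A r -> L r) ->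
  forall v, forces W R S V (upd I l w) v A <-> forces W R S V I v A.
Proof.
  intros Hl H v. apply forces_ext. intros r Hr. apply (upd_old I l w L); auto.
Qed.

Lemma sat_step C B a s : lsat C B -> InvL B -> In a B ->
  rule_inst C (lab B) a s -> exists N, In N (succ_lists s) /\ lsat C (B ++ N).
Proof.
  intros [W [R [S [V [I [Hf [Hh [HR [HS HF]]]]]]]]] HI Ha Hr.
  pose proof HI as [Hd Hb].
  pose proof Hf as [_ [Htr [Hno [HSR [HRS [HSt HRRS]]]]]].
  destruct Hr as [s0 A|s0 A B0|s0 A B0|s0 t A Hst|s0 r t A Hst|s0 t A B0 Hst
                 |s0 n A Hn|s0 r n A Hn Hil|s0 n A B0 Hn];
  pose proof (HF _ _ Ha) as Hfa; simpl in Hfa;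
  assert (Hs0 : lab B s0) by (eexists; eauto);
  pose proof (Hb _ _ Ha) as Hba; simpl in Hba.
  - exists [(s0, A)]; split; [simpl; auto|].
    eapply static_ok; eauto.
    + intros x [A0 [H|[]]]; injection H; intros; subst; auto.
    + intros l A0 [H|[]]; injection H; intros; subst. apply NNPP; auto.
  - destruct (classic (forces W R S V I (I s0) A)) as [HA|HA].
    + exists [(s0, B0)]; split; [simpl; auto|].
      eapply static_ok; eauto.
      * intros x [A0 [H|[]]]; injection H; intros; subst; auto.
      * intros l A0 [H|[]]; injection H; intros; subst. auto.
    + exists [(s0, Neg A)]; split; [simpl; auto|].
      eapply static_ok; eauto.
      * intros x [A0 [H|[]]]; injection H; intros; subst; auto.
      * intros l A0 [H|[]]; injection H; intros; subst. auto.
  - exists [(s0, A); (s0, Neg B0)]; split; [simpl; auto|].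
    eapply static_ok; eauto.
    + intros x [A0 [H|[H|[]]]]; injection H; intros; subst; auto.
    + intros l A0 [H|[H|[]]]; injection H; intros; subst l A0; simpl.
      * apply NNPP; intro Hc; apply Hfa; intro Hx; contradiction.
      * intro Hx; apply Hfa; auto.
  - exists [(t, A)]; split; [simpl; auto|].
    eapply static_ok; eauto.
    + intros x [A0 [H|[]]]; injection H; intros; subst.
      apply clos_labs in Hst; simpl in Hst; tauto.
    + intros l A0 [H|[]]; injection H; intros; subst. apply Hfa; auto.
  - exists [(t, A)]; split; [simpl; auto|].
    eapply static_ok; eauto.
    + intros x [A0 [H|[]]]; injection H; intros; subst.
      apply clos_labs in Hst; simpl in Hst; tauto.
    + intros l A0 [H|[]]; injection H; intros; subst. apply Hfa; apply HS; auto.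
  - assert (Ht : lab B t) by (apply clos_labs in Hst; simpl in Hst; tauto).
    destruct (classic (forces W R S V I (I t) A)) as [HA|HA].
    + exists [(t, Neg (BoxL s0 (Neg B0)))]; split; [simpl; auto|].
      eapply static_ok; eauto.
      * intros x [A0 [H|[]]]; injection H; intros; subst; auto.
      * intros l A0 [H|[]]; injection H; intros; subst. simpl.
        destruct (Hfa (I l) (HR _ _ Hst) HA) as [z [Hz HBz]].
        intro Hc. exact (Hc z Hz HBz).
    + exists [(t, Neg A)]; split; [simpl; auto|].
      eapply static_ok; eauto.
      * intros x [A0 [H|[]]]; injection H; intros; subst; auto.
      * intros l A0 [H|[]]; injection H; intros; subst. auto.
  -
    assert (Hex : exists v, R (I s0) v /\ ~ forces W R S V I v A).
    { apply NNPP; intro Hc; apply Hfa; intros v Hv; apply NNPP; intro Hv'; apply Hc; eauto. }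
    destruct Hex as [v0 Hv0].
    destruct (maximal W R Hno (fun v => R (I s0) v /\ ~ forces W R S V I v A) v0 Hv0) as [y [[Hy1 Hy2] Hmax]].
    exists [(LR s0 n, Neg A); (LR s0 n, Box A)]; split; [simpl; auto|].
    eapply dyn_ok with (l := LR s0 n) (w := y); eauto.
    + simpl; auto.
    + intros x [A0 [H|[H|[]]]]; injection H; intros; subst; auto.
    + intros l A0 [H|[H|[]]]; injection H; intros; subst l A0; simpl.
      * rewrite (agree W R S V I (lab B) (LR s0 n) y A Hn Hba); auto.
      * intros v Hv. rewrite (agree W R S V I (lab B) (LR s0 n) y A Hn Hba).
        apply NNPP; intro Hc. apply (Hmax v Hv). split; eauto.
  -
    assert (Hr : lab B r).
    { inversion Hil; subst. eapply sp_dc; eauto. }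
    assert (Hex : exists v, S (I r) (I s0) v /\ ~ forces W R S V I v A).
    { apply NNPP; intro Hc; apply Hfa; intros v Hv; apply NNPP; intro Hv'; apply Hc; eauto. }
    destruct Hex as [v0 Hv0].
    destruct (maximal W R Hno (fun v => S (I r) (I s0) v /\ ~ forces W R S V I v A) v0 Hv0) as [y [[Hy1 Hy2] Hmax]].
    assert (Hba' : forall r0, bl A r0 -> lab B r0) by (intros; apply Hba; auto).
    exists [(LS s0 r n, Neg A); (LS s0 r n, Box A)]; split; [simpl; auto|].
    eapply dyn_ok with (l := LS s0 r n) (w := y); eauto.
    + simpl; auto.
    + intros x [A0 [H|[H|[]]]]; injection H; intros; subst; auto.
    + intros l A0 [H|[H|[]]]; injection H; intros; subst l A0; simpl.
      * rewrite (agree W R S V I (lab B) (LS s0 r n) y A Hn Hba'); auto.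
      * intros v Hv. rewrite (agree W R S V I (lab B) (LS s0 r n) y A Hn Hba').
        apply NNPP; intro Hc. apply (Hmax v Hv). split; auto.
        eapply HSt; [exact Hy1|]. apply HRRS; auto. apply (HSR _ _ _ Hy1).
  -
    assert (Hex : exists v, R (I s0) v /\ forces W R S V I v A /\
               forall z, S (I s0) v z -> ~ forces W R S V I z B0).
    { apply NNPP; intro Hc; apply Hfa; intros v Hv HvA.
      apply NNPP; intro Hv'; apply Hc; exists v; repeat split; auto.
      intros z Hz HzB; apply Hv'; eauto. }
    destruct Hex as [v0 Hv0].
    destruct (maximal W R Hno (fun v => R (I s0) v /\ forces W R S V I v A /\ forall z, S (I s0) v z -> ~ forces W R S V I z B0) v0 Hv0) as [y [[Hy1 [Hy2 Hy3]] Hmax]].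
    assert (HbA : forall r0, bl A r0 -> lab B r0) by (intros; apply Hba; auto).
    assert (HbB : forall r0, bl B0 r0 -> lab B r0) by (intros; apply Hba; auto).
    exists [(LR s0 n, A); (LR s0 n, BoxL s0 (Neg B0)); (LR s0 n, Box (Neg A))];
      split; [simpl; auto|].
    eapply dyn_ok with (l := LR s0 n) (w := y); eauto.
    + simpl; auto.
    + intros x [A0 [H|[H|[H|[]]]]]; injection H; intros; subst; auto.
    + intros l A0 [H|[H|[H|[]]]]; injection H; intros; subst l A0; simpl.
      * rewrite (agree W R S V I (lab B) (LR s0 n) y A Hn HbA); auto.
      * intros z Hz. rewrite (agree W R S V I (lab B) (LR s0 n) y B0 Hn HbB).
        rewrite (upd_old I (LR s0 n) y (lab B) s0) in Hz; auto.
      * intros v Hv. rewrite (agree W R S V I (lab B) (LR s0 n) y A Hn HbA).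
        intro HvA. apply (Hmax v Hv). split; [eauto|split; auto].
        intros z Hz. apply Hy3. eapply HSt; [|exact Hz]. apply HRRS; auto.
Qed.

Theorem mainTheorem2 :
  forall (X : form -> Prop) (C : hsent -> Prop),
    (forall A, X A -> pure A) ->
    horn_for X C ->
    forall (Gamma : list form), (forall A, In A Gamma -> pure A) ->
    forall T : tree, is_tableau C Gamma T -> tab_sat C T ->
    forall T' : tree, rule_step C T T' -> tab_sat C T'.
Proof.
  intros X C _ _ Gamma HG T HT [B0 [Hb0 Hs0]] T' [B [a [s [HB [Ha [Hr He]]]]]].
  destruct (classic (B0 = B)) as [->|Hne].
  - destruct (sat_step C B a s Hs0 (tab_inv C Gamma T HG HT B HB) Ha Hr) as [N [HN Hs]].
    exists (B ++ N); split; auto. eapply ext_new; eauto.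
  - exists B0; split; auto. eapply ext_old; eauto.
Qed.
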